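(* There is a constant $c>0$ such that the following holds. Let $f:\mathbb{N}\to\mathbb{R}_{\ge 0}$ and suppose a comparison-based predecessor search algorithm on a sorted array $A$ of size $n$ has the property that, for every sequence of predecessor searches $x_1,\dots,x_m$ and every $y\in A$, the amortized number of comparisons involving $y$ caused by search $x_i$ is at most $f(d(x_i,y))$ (i.e., the total number of comparisons involving $y$ over the sequence is, up to an additive term independent of $m$, at most $\sum_{i=1}^m f(d(x_i,y))$). Then $\sum_{k=1}^{p} f(k)\ge c\log p$ for all $p\le n$.
   Context: A predecessor search with query $x$ in a sorted array $A=A[0],\dots,A[n-1]$ returns the index of the largest element of $A$ smaller than $x$. For a query $x$ and $y\in A$, $d(x,y)$ denotes the number of elements of $A$ between $x$ and $y$ in $A$, inclusive. An element participates in a comparison if it is one of the two elements compared. *)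

(* Defs.v *)
From Stdlib Require Import Reals List Arith.
Import ListNotations.
Open Scope R_scope.

Definition strictly_sorted (A : nat -> R) (n : nat) : Prop :=
  forall i j, (i < j < n)%nat -> A i < A j.

(* Correct predecessor answer for query x:
   Some i = index of the largest element of A smaller than x,
   None   = no element of A is smaller than x. *)
Definition is_pred (A : nat -> R) (n : nat) (x : R) (a : option nat) : Prop :=
  match a with
  | Some i => (i < n)%nat /\ A i < x /\ (forall j, (i < j < n)%nat -> x <= A j)
  | None => forall j, (j < n)%nat -> x <= A j
  end.

(* d(x, A j): number of elements of A lying between x and A j, inclusive. *)
Definition inb (lo hi v : R) : bool :=
  if Rle_dec lo v then (if Rle_dec v hi then true else false) else false.

Definition dist_elems (A : nat -> R) (n : nat) (x : R) (j : nat) : nat :=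
  length (filter (fun k => inb (Rmin x (A j)) (Rmax x (A j)) (A k)) (seq 0 n)).

(* One predecessor search of a comparison-based algorithm with memory
   state S: a ternary decision tree.  [Node j t_lt t_eq t_gt] compares the
   query x with the array element A j; a leaf returns the answer and the
   new memory state. *)
Inductive dtree (S : Type) : Type :=
| Leaf : option nat -> S -> dtree S
| Node : nat -> dtree S -> dtree S -> dtree S -> dtree S.
Arguments Leaf {S}.
Arguments Node {S}.

Fixpoint valid_tree {S : Type} (n : nat) (t : dtree S) : Prop :=
  match t with
  | Leaf _ _ => True
  | Node j t1 t2 t3 => (j < n)%nat /\ valid_tree n t1 /\ valid_tree n t2 /\ valid_tree n t3
  end.

(* Execute a tree on query x: (answer, new state, list of array indices
   that participated in a comparison, with multiplicity). *)
Fixpoint eval_tree {S : Type} (A : nat -> R) (x : R) (t : dtree S)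
  : option nat * S * list nat :=
  match t with
  | Leaf a s => (a, s, [])
  | Node j t1 t2 t3 =>
      match total_order_T x (A j) with
      | inleft (left _) => let '(a, s, tr) := eval_tree A x t1 in (a, s, j :: tr)
      | inleft (right _) => let '(a, s, tr) := eval_tree A x t2 in (a, s, j :: tr)
      | inright _ => let '(a, s, tr) := eval_tree A x t3 in (a, s, j :: tr)
      end
  end.

Fixpoint run {S : Type} (A : nat -> R) (alg : S -> dtree S) (s : S) (xs : list R)
  : list (option nat * list nat) :=
  match xs with
  | [] => []
  | x :: xs' =>
      let '(a, s', tr) := eval_tree A x (alg s) in (a, tr) :: run A alg s' xs'
  end.

Definition involvements (j : nat) (r : list (option nat * list nat)) : nat :=
  fold_right Nat.add 0%nat (map (fun p => count_occ Nat.eq_dec (snd p) j) r).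

Definition sumR (l : list R) : R := fold_right Rplus 0 l.

(* Main.v *)
Require Import Defs.
From Stdlib Require Import Reals List Arith Lia Lra ZArith.
Import ListNotations.
Open Scope R_scope.

Lemma sorted_lt A n i j : strictly_sorted A n -> (i < n)%nat -> (j < n)%nat ->
  A i < A j -> (i < j)%nat.
Proof. intros HS Hi Hj H. destruct (lt_eq_lt_dec i j) as [[|]|]; auto.
  subst; lra. assert (A j < A i) by (apply HS; lia). lra. Qed.

Lemma sorted_le A n i j : strictly_sorted A n -> (i < n)%nat -> (j < n)%nat ->
  A i <= A j -> (i <= j)%nat.
Proof. intros HS Hi Hj H. destruct (le_lt_dec i j); auto.
  assert (A j < A i) by (apply HS; lia). lra. Qed.

Lemma sorted_le' A n i j : strictly_sorted A n -> (j < n)%nat -> (i <= j)%nat -> A i <= A j.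
Proof. intros HS Hj H. destruct (Nat.eq_dec i j). subst; lra.
  left; apply HS; lia. Qed.

Lemma inb_iff lo hi v : inb lo hi v = true <-> lo <= v <= hi.
Proof. unfold inb. destruct (Rle_dec lo v); destruct (Rle_dec v hi); split; intros; try lra; try discriminate; auto;
  destruct H; contradiction. Qed.

Lemma count_interval (P : nat -> bool) n a b :
  (forall k, (k < n)%nat -> (P k = true <-> (a <= k <= b)%nat)) ->
  forall m, (m <= n)%nat ->
  length (filter P (seq 0 m)) = (Nat.min m (S b) - Nat.min m a)%nat.
Proof. intros H m. induction m; intros Hm. simpl; lia.
  rewrite seq_S, filter_app, length_app, IHm by lia. rewrite Nat.add_0_l. cbn [filter].
  destruct (P m) eqn:E.
  - assert (Hm' : (m < n)%nat) by lia. apply (H m Hm') in E. cbn [length]. lia.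
  - assert (~ (a <= m <= b)%nat). { intro C. apply H in C; [congruence|lia]. }
    cbn [length]. lia.
Qed.

Lemma dist_interval A n x j a b :
  (forall k, (k < n)%nat -> (Rmin x (A j) <= A k <= Rmax x (A j) <-> (a <= k <= b)%nat)) ->
  (a <= b < n)%nat -> dist_elems A n x j = (S b - a)%nat.
Proof. intros H Hab. unfold dist_elems.
  rewrite (count_interval _ n a b); [lia| |lia].
  intros k Hk; cbv beta; rewrite inb_iff; auto. Qed.

Definition q (A : nat -> R) (i : nat) : R :=
  match i with 0%nat => A 0%nat - 1 | S i' => (A i' + A (S i')) / 2 end.

Definition code (i : nat) : option nat :=
  match i with 0%nat => None | S i' => Some i' end.

Lemma code_inj i k : code i = code k -> i = k.
Proof. destruct i, k; simpl; intros H; congruence. Qed.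

Lemma q_lt A n i : strictly_sorted A n -> (i < n)%nat -> q A i < A i.
Proof. intros HS Hi. destruct i; simpl. lra.
  assert (A i < A (S i)) by (apply HS; lia). lra. Qed.

Lemma q_gt A n i : strictly_sorted A n -> (S i < n)%nat -> A i < q A (S i).
Proof. intros HS Hi. simpl.
  assert (A i < A (S i)) by (apply HS; lia). lra. Qed.

Lemma q_above A n i k : strictly_sorted A n -> (i < n)%nat -> (k < n)%nat ->
  (i <= k)%nat -> q A i < A k.
Proof. intros HS Hi Hk Hik. pose proof (q_lt A n i HS Hi).
  pose proof (sorted_le' A n i k HS Hk Hik). lra. Qed.

Lemma q_below A n i k : strictly_sorted A n -> (i < n)%nat -> (k < i)%nat ->
  A k < q A i.
Proof. intros HS Hi Hk. destruct i. lia.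
  pose proof (q_gt A n i HS Hi).
  pose proof (sorted_le' A n k i HS ltac:(lia) ltac:(lia)). lra. Qed.

Lemma q_le_iff A n i k : strictly_sorted A n -> (i < n)%nat -> (k < n)%nat ->
  (q A i <= A k <-> (i <= k)%nat).
Proof. intros HS Hi Hk. split; intros H.
  - destruct (le_lt_dec i k); auto. pose proof (q_below A n i k HS Hi l). lra.
  - left; apply (q_above A n); auto. Qed.

Lemma dist_q A n i j : strictly_sorted A n -> (i < n)%nat -> (j < n)%nat ->
  dist_elems A n (q A i) j = if (i <=? j)%nat then (S j - i)%nat else (i - j)%nat.
Proof. intros HS Hi Hj. destruct (Nat.leb_spec i j).
  - apply (dist_interval _ _ _ _ i j); [|lia]. intros k Hk.
    assert (q A i <= A j) by (apply (q_le_iff A n i j HS Hi Hj); auto).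
    rewrite Rmin_left, Rmax_right by auto.
    rewrite (q_le_iff A n i k HS Hi Hk). split; intros [H1 H2]; split; auto.
    apply (sorted_le A n k j HS Hk Hj H2). apply (sorted_le' A n k j HS Hj H2).
  - replace (i - j)%nat with (S (i - 1) - j)%nat by lia.
    apply (dist_interval _ _ _ _ j (i-1)); [|lia]. intros k Hk.
    assert (A j <= q A i) by (left; apply (q_below A n); auto).
    rewrite Rmin_right, Rmax_left by auto.
    split; intros [H1 H2]; split.
    + apply (sorted_le A n); auto.
    + destruct (le_lt_dec i k); [|lia]. pose proof (q_above A n i k HS Hi Hk l). lra.
    + apply (sorted_le' A n); auto.
    + apply Rlt_le, (q_below A n); auto; lia.
Qed.

Lemma pred_q A n i a : strictly_sorted A n -> (i < n)%nat ->
  is_pred A n (q A i) a -> a = code i.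
Proof. intros HS Hi H. destruct a as [m|]; simpl in H.
  - destruct H as [Hm [H1 H2]].
    assert (m < i)%nat. { destruct (le_lt_dec i m); auto.
      pose proof (q_above A n i m HS Hi Hm l). lra. }
    destruct i; [lia|]. simpl. f_equal.
    destruct (Nat.eq_dec m i); auto.
    assert (q A (S i) <= A i) by (apply H2; lia).
    pose proof (q_gt A n i HS Hi). lra.
  - destruct i; auto. assert (q A (S i) <= A i) by (apply H; lia).
    pose proof (q_gt A n i HS Hi). lra.
Qed.

Definition br {T : Type} (x a : R) (t1 t2 t3 : T) : T :=
  if Rlt_dec x a then t1 else if Req_dec_T x a then t2 else t3.

Lemma br_nat {T : Type} x a (t1 t2 t3 : T) :
  br x a t1 t2 t3 = match br x a 0%nat 1%nat 2%nat with 0%nat => t1 | 1%nat => t2 | _ => t3 end.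
Proof. unfold br. destruct Rlt_dec; auto. destruct Req_dec_T; auto. Qed.

Lemma br_lt3 x a : (br x a 0%nat 1%nat 2%nat < 3)%nat.
Proof. unfold br. destruct Rlt_dec; auto. destruct Req_dec_T; auto. Qed.

Lemma eval_node {S : Type} A x j (t1 t2 t3 : dtree S) :
  eval_tree A x (Node j t1 t2 t3) =
  (fst (fst (eval_tree A x (br x (A j) t1 t2 t3))),
   snd (fst (eval_tree A x (br x (A j) t1 t2 t3))),
   j :: snd (eval_tree A x (br x (A j) t1 t2 t3))).
Proof. simpl. unfold br.
  destruct (total_order_T x (A j)) as [[H|H]|H];
  destruct Rlt_dec; try lra; try (destruct Req_dec_T; try lra);
  destruct (eval_tree A x _) as [[a s] tr]; reflexivity. Qed.

Definition wc (p : nat) (tr : list nat) : nat := length (filter (fun j => (j <? p)%nat) tr).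
Definition ans {S : Type} A (t : dtree S) x := fst (fst (eval_tree A x t)).
Definition trc {S : Type} A (t : dtree S) x := snd (eval_tree A x t).

Lemma len_split (o : nat -> nat) (l : list nat) :
  (forall i, (o i < 3)%nat) ->
  (length l <= length (filter (fun i => (o i =? 0)%nat) l) + length (filter (fun i => (o i =? 1)%nat) l)
     + length (filter (fun i => (o i =? 2)%nat) l))%nat.
Proof. intros Ho. induction l as [|a l IH]; simpl; auto.
  pose proof (Ho a). destruct (o a) as [|[|[|]]]; simpl; lia. Qed.

Lemma nodup_const (I : list nat) i0 : NoDup I -> (forall i, In i I -> i = i0) -> (length I <= 1)%nat.
Proof. intros ND H. destruct I as [|a [|b I']]; simpl; auto.
  inversion ND; subst. exfalso. apply H2. left.
  rewrite (H a), (H b); simpl; auto. Qed.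

Lemma depth A n p {S : Type} (t : dtree S) :
  strictly_sorted A n -> (p <= n)%nat -> valid_tree n t ->
  forall I, NoDup I -> I <> [] -> (forall i, In i I -> (i < p)%nat) ->
  (forall i k, In i I -> In k I -> ans A t (q A i) = ans A t (q A k) -> i = k) ->
  exists i, In i I /\ (length I <= 3 ^ wc p (trc A t (q A i)))%nat.
Proof.
  intros HS Hpn. induction t as [a s | j t1 IH1 t2 IH2 t3 IH3]; intros Hv I ND NE Hp Hinj.
  - destruct I as [|i0 I']; [congruence|]. exists i0. split; [left; auto|].
    unfold trc, wc; simpl. apply (nodup_const _ i0 ND).
    intros i Hi. apply Hinj; auto. left; auto.
  - destruct Hv as [Hj [V1 [V2 V3]]].
    destruct (le_lt_dec p j) as [Hpj|Hpj].
    + assert (Hb : forall i, In i I -> br (q A i) (A j) t1 t2 t3 = t1).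
      { intros i Hi. unfold br. destruct Rlt_dec; auto. exfalso; apply n0.
        apply (q_above A n); auto; pose proof (Hp i Hi); lia. }
      destruct (IH1 V1 I ND NE Hp) as [i [Hi Hl]].
      { intros i k Hi Hk E. apply Hinj; auto. unfold ans in *.
        rewrite !eval_node; simpl. rewrite (Hb i Hi), (Hb k Hk). auto. }
      exists i. split; auto. unfold trc, wc in *. rewrite eval_node. simpl.
      rewrite (Hb i Hi). destruct (Nat.ltb_spec j p); [lia|]. auto.
    + set (o := fun i => br (q A i) (A j) 0%nat 1%nat 2%nat).
      assert (Hstep : forall (tk : dtree S) k, valid_tree n tk ->
        (forall I, NoDup I -> I <> [] -> (forall i, In i I -> (i < p)%nat) ->
         (forall i k, In i I -> In k I -> ans A tk (q A i) = ans A tk (q A k) -> i = k) ->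
         exists i, In i I /\ (length I <= 3 ^ wc p (trc A tk (q A i)))%nat) ->
        (forall i, o i = k -> br (q A i) (A j) t1 t2 t3 = tk) ->
        (length I <= 3 * length (filter (fun i => (o i =? k)%nat) I))%nat ->
        exists i, In i I /\ (length I <= 3 ^ wc p (trc A (Node j t1 t2 t3) (q A i)))%nat).
      { intros tk k Vk IHk Hbk Hlen.
        set (Ik := filter (fun i => (o i =? k)%nat) I) in *.
        assert (HIk : forall i, In i Ik -> In i I /\ o i = k).
        { intros i Hi. apply filter_In in Hi. destruct Hi as [H1 H2].
          split; auto. apply Nat.eqb_eq; auto. }
        destruct (IHk Ik) as [i [Hi Hl]].
        * apply NoDup_filter; auto.
        * intro E. rewrite E in Hlen. simpl in Hlen. destruct I; [congruence|simpl in Hlen; lia].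
        * intros i Hi. apply Hp, HIk, Hi.
        * intros i k' Hi Hk E. apply Hinj; try apply HIk; auto.
          unfold ans in *. rewrite !eval_node; simpl.
          rewrite (Hbk i), (Hbk k'); try apply HIk; auto.
        * exists i. split; [apply HIk; auto|]. unfold trc, wc in *. rewrite eval_node. simpl.
          rewrite (Hbk i) by (apply HIk; auto). destruct (Nat.ltb_spec j p); [|lia].
          simpl. lia. }
      pose proof (len_split o I (fun i => br_lt3 _ _)) as Hls.
      assert (3 * length (filter (fun i => (o i =? 0)%nat) I) >= length I \/
              3 * length (filter (fun i => (o i =? 1)%nat) I) >= length I \/
              3 * length (filter (fun i => (o i =? 2)%nat) I) >= length I)%nat as [H|[H|H]] by lia.
      * apply (Hstep t1 0%nat V1 (IH1 V1)); auto. intros i Hi. rewrite br_nat. fold (o i). rewrite Hi. auto.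
      * apply (Hstep t2 1%nat V2 (IH2 V2)); auto. intros i Hi. rewrite br_nat. fold (o i). rewrite Hi. auto.
      * apply (Hstep t3 2%nat V3 (IH3 V3)); auto. intros i Hi. rewrite br_nat. fold (o i). rewrite Hi. auto.
Qed.

Definition Correct A n {S : Type} (alg : S -> dtree S) (s : S) : Prop :=
  forall xs : list R, Forall2 (fun x r => is_pred A n x (fst r)) xs (run A alg s xs).

Definition Wc (p : nat) (r : list (option nat * list nat)) : nat :=
  fold_right Nat.add 0%nat (map (fun pr => wc p (snd pr)) r).

Lemma correct_step A n {S : Type} (alg : S -> dtree S) s x a s' tr :
  Correct A n alg s -> eval_tree A x (alg s) = (a, s', tr) ->
  is_pred A n x a /\ Correct A n alg s'.
Proof. intros C E. split.
  - specialize (C [x]). simpl in C. rewrite E in C. inversion C; auto.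
  - intros xs. specialize (C (x :: xs)). simpl in C. rewrite E in C. inversion C; auto.
Qed.

Lemma claim A n p {S : Type} (alg : S -> dtree S) :
  strictly_sorted A n -> (1 <= p <= n)%nat -> (forall s, valid_tree n (alg s)) ->
  forall m s, Correct A n alg s ->
  exists xs, length xs = m /\ (forall x, In x xs -> exists i, (i < p)%nat /\ x = q A i) /\
    (p ^ m <= 3 ^ Wc p (run A alg s xs))%nat.
Proof.
  intros HS Hp Hv m. induction m as [|m IH]; intros s C.
  - exists []. simpl. repeat split; auto. intros x [].
  - destruct (depth A n p (alg s) HS ltac:(lia) (Hv s) (seq 0 p)) as [i [Hi Hl]].
    + apply seq_NoDup.
    + destruct p; [lia|]. simpl; congruence.
    + intros i Hi. apply in_seq in Hi. lia.
    + intros i k Hi Hk E. apply in_seq in Hi. apply in_seq in Hk.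
      unfold ans in E.
      destruct (eval_tree A (q A i) (alg s)) as [[a1 s1] tr1] eqn:E1.
      destruct (eval_tree A (q A k) (alg s)) as [[a2 s2] tr2] eqn:E2.
      simpl in E. subst.
      destruct (correct_step A n alg s _ _ _ _ C E1) as [P1 _].
      destruct (correct_step A n alg s _ _ _ _ C E2) as [P2 _].
      apply pred_q in P1; [|auto|lia]. apply pred_q in P2; [|auto|lia].
      apply code_inj. congruence.
    + rewrite length_seq in Hl. apply in_seq in Hi.
      unfold trc in Hl.
      destruct (eval_tree A (q A i) (alg s)) as [[a1 s1] tr1] eqn:E1.
      destruct (correct_step A n alg s _ _ _ _ C E1) as [_ C1].
      destruct (IH s1 C1) as [xs [Hlen [Hw Hpow]]].
      exists (q A i :: xs). split; [simpl; auto|]. split.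
      * intros x [Hx|Hx]; [exists i; split; auto; lia|auto].
      * simpl. rewrite E1. unfold Wc. simpl. fold (Wc p (run A alg s1 xs)).
        rewrite Nat.pow_add_r. simpl in Hl. apply Nat.mul_le_mono; auto.
Qed.

Definition nsum (l : list nat) : nat := fold_right Nat.add 0%nat l.

Lemma nsum_map_add {T : Type} (f g : T -> nat) l :
  nsum (map (fun j => f j + g j)%nat l) = (nsum (map f l) + nsum (map g l))%nat.
Proof. induction l; simpl; auto. rewrite IHl. lia. Qed.

Lemma nsum_swap {T U : Type} (g : T -> U -> nat) (l1 : list T) (l2 : list U) :
  nsum (map (fun j => nsum (map (fun x => g x j) l1)) l2) =
  nsum (map (fun x => nsum (map (fun j => g x j) l2)) l1).
Proof. induction l1; simpl.
  - induction l2; simpl; auto.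
  - rewrite nsum_map_add. rewrite IHl1. auto. Qed.

Lemma nsum_app l1 l2 : nsum (l1 ++ l2) = (nsum l1 + nsum l2)%nat.
Proof. induction l1; simpl; auto. rewrite IHl1. lia. Qed.

Lemma nsum_ind_seq a p :
  nsum (map (fun j => if Nat.eq_dec a j then 1%nat else 0%nat) (seq 0 p)) = if (a <? p)%nat then 1%nat else 0%nat.
Proof. induction p. simpl. destruct (Nat.ltb_spec a 0); lia.
  rewrite seq_S, map_app, nsum_app, IHp. simpl.
  destruct (Nat.eq_dec a p); destruct (Nat.ltb_spec a p); destruct (Nat.ltb_spec a (S p)); lia.
Qed.

Lemma wc_count p tr : wc p tr = nsum (map (fun j => count_occ Nat.eq_dec tr j) (seq 0 p)).
Proof. induction tr as [|a tr IH].
  - unfold wc; simpl. induction (seq 0 p); simpl; auto.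
  - transitivity (nsum (map (fun j => (if Nat.eq_dec a j then 1%nat else 0%nat) + count_occ Nat.eq_dec tr j)%nat (seq 0 p))).
    + rewrite (nsum_map_add (fun j => if Nat.eq_dec a j then 1%nat else 0%nat) (fun j => count_occ Nat.eq_dec tr j)), nsum_ind_seq, <- IH. unfold wc; simpl. destruct (a <? p)%nat; simpl; auto.
    + f_equal. apply map_ext. intros j. simpl. destruct (Nat.eq_dec a j); auto.
Qed.

Lemma Wc_inv p r : Wc p r = nsum (map (fun j => involvements j r) (seq 0 p)).
Proof. unfold Wc, involvements.
  change (fold_right Nat.add 0%nat) with nsum.
  rewrite (map_ext (fun pr : option nat * list nat => wc p (snd pr))
     (fun pr => nsum (map (fun j => count_occ Nat.eq_dec (snd pr) j) (seq 0 p))))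
    by (intros; apply wc_count).
  symmetry. apply (nsum_swap (fun pr j => count_occ Nat.eq_dec (snd pr) j)). Qed.

Lemma INR_nsum l : INR (nsum l) = sumR (map INR l).
Proof. induction l; simpl; auto. rewrite plus_INR, IHl. auto. Qed.

Lemma sumR_app l1 l2 : sumR (l1 ++ l2) = sumR l1 + sumR l2.
Proof. induction l1; simpl. lra. rewrite IHl1. lra. Qed.

Lemma sumR_map_plus {T : Type} (f g : T -> R) l :
  sumR (map (fun j => f j + g j) l) = sumR (map f l) + sumR (map g l).
Proof. induction l; simpl. lra. rewrite IHl. lra. Qed.

Lemma sumR_const {T : Type} (c : R) (l : list T) : sumR (map (fun _ => c) l) = INR (length l) * c.
Proof. induction l; simpl. lra. rewrite IHl. destruct (length l); simpl; lra. Qed.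

Lemma sumR_le {T : Type} (f g : T -> R) l :
  (forall j, In j l -> f j <= g j) -> sumR (map f l) <= sumR (map g l).
Proof. induction l; simpl; intros H. lra.
  pose proof (H a (or_introl eq_refl)). pose proof (IHl (fun j Hj => H j (or_intror Hj))). lra. Qed.

Lemma sumR_swap {T U : Type} (g : T -> U -> R) (l1 : list T) (l2 : list U) :
  sumR (map (fun j => sumR (map (fun x => g x j) l1)) l2) =
  sumR (map (fun x => sumR (map (fun j => g x j) l2)) l1).
Proof. induction l1; simpl.
  - induction l2; simpl; auto. rewrite IHl2. lra.
  - rewrite sumR_map_plus. rewrite IHl1. auto. Qed.

Lemma sumR_nonneg (f : nat -> R) l : (forall k, 0 <= f k) -> 0 <= sumR (map f l).
Proof. intros H. induction l; simpl. lra. pose proof (H a). lra. Qed.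

Lemma prefix_le (f : nat -> R) k p : (forall k, 0 <= f k) -> (k <= p)%nat ->
  sumR (map f (seq 1 k)) <= sumR (map f (seq 1 p)).
Proof. intros H Hk. replace p with (k + (p - k))%nat by lia.
  rewrite seq_app, map_app, sumR_app. pose proof (sumR_nonneg f (seq (1+k) (p-k)) H). lra. Qed.

Lemma rev_sum (g : nat -> R) i :
  sumR (map (fun j => g (i - j)%nat) (seq 0 i)) = sumR (map g (seq 1 i)).
Proof. induction i. simpl. auto.
  change (seq 0 (S i)) with (0%nat :: seq 1 i).
  rewrite <- (seq_shift i 0), map_cons, map_map. cbn [sumR fold_right].
  fold (sumR (map (fun x : nat => g (S i - S x)%nat) (seq 0 i))).
  replace (S i - 0)%nat with (S i) by lia.
  rewrite (map_ext (fun x => g (S i - S x)%nat) (fun j => g (i - j)%nat)) by (intros; f_equal).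
  rewrite IHi, seq_S, map_app, sumR_app. simpl.
  replace (1 + i)%nat with (S i) by lia. lra. Qed.

Lemma shift_sum (g : nat -> R) i k a :
  map (fun j => g (S j - i)%nat) (seq (i + a) k) = map g (seq (S a) k).
Proof. revert a. induction k; intros a; cbn [seq map]; auto.
  replace (S (i + a) - i)%nat with (S a) by lia. f_equal.
  replace (S (i + a)) with (i + S a)%nat by lia. apply IHk. Qed.

Lemma window_bound A n p f i : strictly_sorted A n -> (p <= n)%nat -> (i < p)%nat ->
  (forall k, 0 <= f k) ->
  sumR (map (fun j => f (dist_elems A n (q A i) j)) (seq 0 p)) <= 2 * sumR (map f (seq 1 p)).
Proof. intros HS Hpn Hi Hf.
  rewrite (map_ext_in _ (fun j => f (if (i <=? j)%nat then (S j - i)%nat else (i - j)%nat))).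
  2:{ intros j Hj. apply in_seq in Hj. rewrite dist_q by (auto; lia). auto. }
  replace p with (i + (p - i))%nat at 1 by lia.
  rewrite seq_app, map_app, sumR_app.
  rewrite (map_ext_in _ (fun j => f (i - j)%nat) (seq 0 i)).
  2:{ intros j Hj. apply in_seq in Hj. destruct (Nat.leb_spec i j); [lia|auto]. }
  rewrite (map_ext_in _ (fun j => f (S j - i)%nat) (seq (0 + i) (p - i))).
  2:{ intros j Hj. apply in_seq in Hj. destruct (Nat.leb_spec i j); [auto|lia]. }
  rewrite rev_sum. replace (0 + i)%nat with (i + 0)%nat by lia. rewrite shift_sum.
  pose proof (prefix_le f i p Hf ltac:(lia)). pose proof (prefix_le f (p - i) p Hf ltac:(lia)). lra.
Qed.

Lemma unbounded K : exists m : nat, K < INR m.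
Proof. destruct (archimed K) as [H1 _].
  exists (Z.to_nat (up K)). rewrite INR_IZR_INZ.
  destruct (Z_le_gt_dec 0 (up K)).
  - rewrite Z2Nat.id by auto. lra.
  - assert (IZR (up K) <= 0) by (apply IZR_le; lia).
    pose proof (pos_INR (Z.to_nat (up K))). rewrite INR_IZR_INZ in H0. lra.
Qed.

Lemma ln_le' a b : 0 < a -> a <= b -> ln a <= ln b.
Proof. intros Ha [H|H]. left; apply ln_increasing; auto. subst; lra. Qed.

Theorem theorem3 :
  exists c : R, c > 0 /\
  forall (n : nat) (arr : nat -> R) (f : nat -> R)
         (S : Type) (alg : S -> dtree S) (s0 : S),
    strictly_sorted arr n ->
    (forall k, 0 <= f k) ->
    (forall s, valid_tree n (alg s)) ->
    (forall xs : list R,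
        Forall2 (fun x r => is_pred arr n x (fst r)) xs (run arr alg s0 xs)) ->
    (exists C : R, forall (xs : list R) (j : nat), (j < n)%nat ->
        INR (involvements j (run arr alg s0 xs))
          <= C + sumR (map (fun x => f (dist_elems arr n x j)) xs)) ->
    forall p : nat, (1 <= p <= n)%nat ->
      c * ln (INR p) <= sumR (map f (seq 1 p)).
Proof.
  assert (L3 : 0 < ln (INR 3)).
  { rewrite <- ln_1. apply ln_increasing. lra. simpl; lra. }
  exists (/ (2 * ln (INR 3))). split.
  { apply Rlt_gt, Rinv_0_lt_compat. lra. }
  intros n arr f S alg s0 HS Hf Hv Hc [C HC] p Hp.
  set (F := sumR (map f (seq 1 p))).
  assert (HF : 0 <= F) by (apply sumR_nonneg; auto).
  assert (Hp0 : 0 < INR p) by (apply lt_0_INR; lia).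
  assert (Key : forall m, INR m * ln (INR p) <= ln (INR 3) * (INR p * C + INR m * (2 * F))).
  { intros m.
    destruct (claim arr n p alg HS Hp Hv m s0 Hc) as [xs [Hlen [Hw Hpow]]].
    set (W := Wc p (run arr alg s0 xs)) in *.
    assert (A1 : INR m * ln (INR p) <= INR W * ln (INR 3)).
    { apply le_INR in Hpow. rewrite !pow_INR in Hpow.
      rewrite <- !ln_pow by (simpl; lra).
      apply ln_le'; auto. apply pow_lt; auto. }
    assert (A2 : INR W <= INR p * C + INR m * (2 * F)).
    { unfold W. rewrite Wc_inv, INR_nsum, map_map.
      eapply Rle_trans.
      { apply (sumR_le _ (fun j => C + sumR (map (fun x => f (dist_elems arr n x j)) xs))).
        intros j Hj. apply in_seq in Hj. apply HC. lia. }
      rewrite (sumR_map_plus (fun _ => C)), sumR_const, length_seq.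
      rewrite (sumR_swap (fun x j => f (dist_elems arr n x j))).
      apply Rplus_le_compat_l.
      rewrite <- Hlen, <- (sumR_const (2 * F) xs).
      apply sumR_le. intros x Hx. destruct (Hw x Hx) as [i [Hi ->]].
      apply window_bound; auto. lia. }
    assert (INR W * ln (INR 3) <= ln (INR 3) * (INR p * C + INR m * (2 * F))).
    { rewrite Rmult_comm. apply Rmult_le_compat_l; lra. }
    lra. }
  destruct (Rle_lt_dec (ln (INR p)) (2 * ln (INR 3) * F)) as [H|H].
  - apply Rmult_le_reg_l with (2 * ln (INR 3)); [lra|].
    rewrite <- Rmult_assoc, Rinv_r by lra. lra.
  - exfalso. set (Dd := ln (INR p) - 2 * ln (INR 3) * F).
    assert (HD : 0 < Dd) by (unfold Dd; lra).
    destruct (unbounded (ln (INR 3) * INR p * C / Dd)) as [m Hm].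
    pose proof (Key m).
    assert (ln (INR 3) * INR p * C / Dd * Dd < INR m * Dd) by (apply Rmult_lt_compat_r; auto).
    unfold Rdiv in H1. rewrite Rmult_assoc, Rinv_l, Rmult_1_r in H1 by lra.
    unfold Dd in H1. lra.
Qed.
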